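(* Let $p,q\in(0,1)$ and $N\ge1$. For all $x,y\in\mathbb{N}$ with $\min(x,y)\ge N$, $$\mathbb{P}^{(x,y)}_{p,q}(\tau<+\infty)\le\mathbb{P}^{(1,1)}_{p,q}(\tau<+\infty)^N.$$
   Context: Cooperative model: for $p,q\in(0,1)$, a Markov chain $(X_n,Y_n)_{n\ge0}$ on $\mathbb{N}^2$ whose transition law from state $(x,y)$ is $\mu_{(x,y)}=\mathrm{Bin}(2,q)^{*(x+y)}\otimes\mathrm{Bin}(2,p)^{*\min(x,y)}$, i.e. given the past, $X_{n+1}\sim\mathrm{Bin}(2(X_n+Y_n),q)$ and $Y_{n+1}\sim\mathrm{Bin}(2\min(X_n,Y_n),p)$ are independent. $\mathbb{P}^{(x,y)}_{p,q}$ denotes the law of this process started from $(x,y)$. $Z_n=\min(X_n,Y_n)$ and $\tau=\inf\{n\ge0: Z_n=0\}$. *)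

(* Defs.v *)
From HB Require Import structures.
From mathcomp Require Import all_boot all_order all_algebra.
From mathcomp Require Import all_classical all_reals all_analysis.
Set Implicit Arguments. Unset Strict Implicit. Unset Printing Implicit Defensive.
Import Order.TTheory GRing.Theory Num.Theory numFieldNormedType.Exports.
Local Open Scope ring_scope.

(* Binomial pmf: P(Bin(m,r) = k). Note Bin(2,r)^{*m} = Bin(2m,r). *)
Definition binom_pmf (R : realType) (r : R) (m k : nat) : R :=
  ('C(m, k))%:R * r ^+ k * (1 - r) ^+ (m - k).

Definition coop_trans (R : realType) (p q : R) (x y x' y' : nat) : R :=
  binom_pmf q (2 * (x + y))%N x' * binom_pmf p (2 * minn x y)%N y'.

(* coop_hit_le p q n x y = P^{(x,y)}_{p,q}(tau <= n), where
   tau = inf{n >= 0 : min(X_n,Y_n) = 0}; computed by the Markov property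
   (first-step decomposition). *)
Fixpoint coop_hit_le (R : realType) (p q : R) (n x y : nat) : R :=
  if minn x y == 0%N then 1 else
  match n with
  | 0 => 0
  | n'.+1 => \sum_(i < (2 * (x + y)).+1) \sum_(j < (2 * minn x y).+1)
              coop_trans p q x y i j * coop_hit_le p q n' i j
  end.

(* P^{(x,y)}_{p,q}(tau < +oo) = lim_n P^{(x,y)}(tau <= n) (nondecreasing, bounded). *)
Definition coop_hit_prob (R : realType) (p q : R) (x y : nat) : R :=
  limn (fun n => coop_hit_le p q n x y).

(* Main.v *)
Require Import Defs.
From HB Require Import structures.
From mathcomp Require Import all_boot all_order all_algebra.
From mathcomp Require Import all_classical all_reals all_analysis.
From mathcomp Require Import ring lra zify.
Import Order.TTheory GRing.Theory Num.Theory numFieldNormedType.Exports.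
Set Implicit Arguments. Unset Strict Implicit. Unset Printing Implicit Defensive.
Local Open Scope ring_scope.

Section Aux.
Variable R : realType.
Implicit Types (r : R).

Definition T1 (r : R) (f : nat -> R) : nat -> R := fun i => (1 - r) * f i + r * f i.+1.

Lemma pmf_big r M i : (M < i)%N -> binom_pmf r M i = 0.
Proof. by move=> h; rewrite /binom_pmf bin_small // mul0r mul0r. Qed.

Lemma pmf0S r M : binom_pmf r M.+1 0 = (1 - r) * binom_pmf r M 0.
Proof. by rewrite /binom_pmf !bin0 !subn0 !expr0 exprS; ring. Qed.

Lemma pmfSS r M i : binom_pmf r M.+1 i.+1 = (1 - r) * binom_pmf r M i.+1 + r * binom_pmf r M i.
Proof.
rewrite /binom_pmf binS subSS natrD.
case: (ltnP i M) => h.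
  have -> : (M - i = (M - i.+1).+1)%N by rewrite subnSK.
  rewrite !exprS; ring.
rewrite bin_small ?ltnS // (_ : (M - i = 0)%N); last by apply/eqP; rewrite subn_eq0.
rewrite (_ : (M - i.+1 = 0)%N); last by apply/eqP; rewrite subn_eq0 ltnW.
rewrite !exprS; ring.
Qed.

Lemma pascal_sum r M (f : nat -> R) :
  \sum_(i < M.+2) binom_pmf r M.+1 i * f i = \sum_(i < M.+1) binom_pmf r M i * T1 r f i.
Proof.
have -> : \sum_(i < M.+1) binom_pmf r M i * T1 r f i = \sum_(i < M.+2) binom_pmf r M i * T1 r f i.
  by rewrite [RHS]big_ord_recr /= (pmf_big r (ltnSn M)) mul0r addr0.
rewrite /T1.
under [RHS]eq_bigr do rewrite mulrDr.
rewrite big_split /=.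
rewrite [X in _ = _ + X]big_ord_recr /= (pmf_big r (ltnSn M)) mul0r addr0.
rewrite big_ord_recl [X in _ = X + _]big_ord_recl /= pmf0S.
have bump0 : forall i : nat, bump 0 i = i.+1 by move=> i; rewrite /bump leq0n add1n.
under eq_bigr => i _ do rewrite bump0 pmfSS mulrDl.
under [X in _ = _ + X + _]eq_bigr => i _ do rewrite bump0.
rewrite big_split /= addrA; congr (_ + _ + _); first ring.
  by apply: eq_bigr => i _; ring.
by apply: eq_bigr => i _; ring.
Qed.

Lemma binsum r M (f : nat -> R) :
  \sum_(i < M.+1) binom_pmf r M i * f i = iter M (T1 r) f 0%N.
Proof.
elim: M f => [|M IH] f.
  by rewrite big_ord_recl big_ord0 /= /binom_pmf bin0 !expr0 !mul1r addr0.
by rewrite pascal_sum IH iterSr.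
Qed.

Definition stp r (di dj : nat) (g : nat -> nat -> R) : nat -> nat -> R :=
  fun i j => (1 - r) * g i j + r * g (i + di)%N (j + dj)%N.

Definition ple (g g' : nat -> nat -> R) := forall i j, g i j <= g' i j.
Definition dec (g : nat -> nat -> R) :=
  forall i j i' j', (i <= i')%N -> (j <= j')%N -> g i' j' <= g i j.
Definition subm (F1 F2 F : nat -> nat -> R) :=
  forall i1 j1 i2 j2, F (i1 + i2)%N (j1 + j2)%N <= F1 i1 j1 * F2 i2 j2.

Variable r : R.
Hypothesis r0 : 0 <= r.
Hypothesis r1 : r <= 1.
Variables di dj : nat.

Lemma r1' : 0 <= 1 - r. Proof. by rewrite subr_ge0. Qed.

Lemma stp_mono g g' : ple g g' -> ple (stp r di dj g) (stp r di dj g').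
Proof.
move=> h i j; rewrite /stp; apply: lerD; apply: ler_wpM2l => //; exact: r1'.
Qed.

Lemma iter_mono k g g' : ple g g' -> ple (iter k (stp r di dj) g) (iter k (stp r di dj) g').
Proof. by elim: k => [|k IH] //= h; apply: stp_mono; apply: IH. Qed.

Lemma stp_dec g : dec g -> dec (stp r di dj g).
Proof.
move=> h i j i' j' hi hj; rewrite /stp; apply: lerD; apply: ler_wpM2l; try exact: r1'; try done.
  exact: h.
by apply: h; rewrite leq_add2r.
Qed.

Lemma iter_dec k g : dec g -> dec (iter k (stp r di dj) g).
Proof. by elim: k => [|k IH] //= h; apply: stp_dec; apply: IH. Qed.

Lemma stp_le g : dec g -> ple (stp r di dj g) g.
Proof.
move=> h i j; rewrite /stp.
have : g (i + di)%N (j + dj)%N <= g i j by apply: h; rewrite leq_addr.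
move=> H; have := ler_wpM2l r0 H; lra.
Qed.

Lemma iter_le k g : dec g -> ple (iter k (stp r di dj) g) g.
Proof.
elim: k => [|k IH] //= h i j; first by [].
apply: le_trans (IH h i j); apply: stp_le; exact: iter_dec.
Qed.

Lemma subm_l F1 F2 F : subm F1 F2 F -> subm (stp r di dj F1) F2 (stp r di dj F).
Proof.
move=> h i1 j1 i2 j2; rewrite /stp.
have e1 : (i1 + i2 + di = i1 + di + i2)%N by rewrite addnAC.
have e2 : (j1 + j2 + dj = j1 + dj + j2)%N by rewrite addnAC.
rewrite e1 e2 [X in _ <= X]mulrDl -!mulrA; apply: lerD; apply: ler_wpM2l; try exact: r1'; try done; exact: h.
Qed.

Lemma subm_r F1 F2 F : subm F1 F2 F -> subm F1 (stp r di dj F2) (stp r di dj F).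
Proof.
move=> h i1 j1 i2 j2; rewrite /stp.
rewrite -!addnA [X in _ <= X]mulrDr mulrCA [F1 i1 j1 * (r * _)]mulrCA; apply: lerD; apply: ler_wpM2l; try exact: r1'; try done; exact: h.
Qed.

Lemma subm_iter_l k F1 F2 F : subm F1 F2 F -> subm (iter k (stp r di dj) F1) F2 (iter k (stp r di dj) F).
Proof. by elim: k => [|k IH] //= h; apply: subm_l; apply: IH. Qed.

Lemma subm_iter_r k F1 F2 F : subm F1 F2 F -> subm F1 (iter k (stp r di dj) F2) (iter k (stp r di dj) F).
Proof. by elim: k => [|k IH] //= h; apply: subm_r; apply: IH. Qed.

Definition pos (g : nat -> nat -> R) := forall i j, 0 <= g i j.

Lemma iter_pos k g : pos g -> pos (iter k (stp r di dj) g).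
Proof.
elim: k => [|k IH] //= h i j; rewrite /stp.
by apply: addr_ge0; apply: mulr_ge0; rewrite ?r1' ?r0 ?IH.
Qed.

End Aux.

Section Main.
Variable R : realType.
Variables p q : R.
Hypothesis p0 : 0 <= p.
Hypothesis p1 : p <= 1.
Hypothesis q0 : 0 <= q.
Hypothesis q1 : q <= 1.

Lemma stpB (r : R) G i j : stp r 0 1 G i j = (1 - r) * G i j + r * G i j.+1.
Proof. by rewrite /stp addn0 addn1. Qed.
Lemma stpA (r : R) G i j : stp r 1 0 G i j = (1 - r) * G i j + r * G i.+1 j.
Proof. by rewrite /stp addn0 addn1. Qed.

Lemma iterB_eq K (g : nat -> nat -> R) i j :
  iter K (stp p 0 1) g i j = iter K (T1 p) (g i) j.
Proof. by elim: K j => [|K IH] j; [done | rewrite !iterS stpB /T1 !IH]. Qed.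

Lemma iterA_eq M (g : nat -> nat -> R) i j :
  iter M (stp q 1 0) g i j = iter M (T1 q) (fun i => g i j) i.
Proof. by elim: M i => [|M IH] i; [done | rewrite !iterS stpA /T1 !IH]. Qed.

Definition E M K (g : nat -> nat -> R) := iter M (stp q 1 0) (iter K (stp p 0 1) g) 0%N 0%N.

Lemma dsum M K (g : nat -> nat -> R) :
  \sum_(i < M.+1) \sum_(j < K.+1) (binom_pmf q M i * binom_pmf p K j) * g i j = E M K g.
Proof.
under eq_bigr => i _ do under eq_bigr => j _ do rewrite -mulrA.
under eq_bigr => i _ do rewrite -mulr_sumr (binsum p K (g i)) -iterB_eq.
by rewrite (binsum q M (fun i => iter K (stp p 0 1) g i 0%N)) /E iterA_eq.
Qed.

Definition h n x y := coop_hit_le p q n x y.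

Lemma h_min0 n x y : minn x y = 0%N -> h n x y = 1.
Proof. by move=> H; case: n => [|n]; rewrite /h /= H. Qed.

Lemma iterA_one M (g : nat -> nat -> R) : (forall i, g i 0%N = 1) -> forall i, iter M (stp q 1 0) g i 0%N = 1.
Proof.
move=> H; elim: M => [|M IH] i //=; rewrite /stp !IH; ring.
Qed.

Lemma h_rec n x y : h n.+1 x y = E (2 * (x + y)) (2 * minn x y) (h n).
Proof.
case: (eqVneq (minn x y) 0%N) => H.
  rewrite h_min0 // H muln0 /E /=; symmetry; apply: iterA_one => i.
  by apply: h_min0; rewrite minn0.
rewrite /h /= (negbTE H) -dsum; apply: eq_bigr => i _; apply: eq_bigr => j _.
by rewrite /coop_trans.
Qed.

Lemma E_mono M K g g' : ple g g' -> E M K g <= E M K g'.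
Proof. by move=> H; apply: iter_mono => //; apply: iter_mono. Qed.

Lemma E_pos M K g : pos g -> 0 <= E M K g.
Proof. by move=> H; apply: iter_pos => //; apply: iter_pos. Qed.

Lemma E_anti M K M' K' g : (M <= M')%N -> (K <= K')%N -> dec g -> E M' K' g <= E M K g.
Proof.
move=> hM hK hg; rewrite /E -(subnKC hM) -(subnKC hK) !iterD.
apply: iter_mono => // i j.
have h1 : dec (iter K (stp p 0 1) (iter (K' - K) (stp p 0 1) g)).
  by apply: iter_dec => //; apply: iter_dec.
have h2 := iter_le q0 q1 1 0 (M' - M) h1 i j.
apply: le_trans h2 _.
by apply: iter_mono => //; apply: iter_le.
Qed.

Lemma E_subm M1 M2 K1 K2 g : subm g g g -> E (M2 + M1) (K2 + K1) g <= E M1 K1 g * E M2 K2 g.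
Proof.
move=> H; rewrite /E !iterD.
have := @subm_iter_r R q q0 q1 1 0 M2 _ _ _ (@subm_iter_l R q q0 q1 1 0 M1 _ _ _
   (@subm_iter_r R p p0 p1 0 1 K2 _ _ _ (@subm_iter_l R p p0 p1 0 1 K1 _ _ _ H))).
by move/(_ 0%N 0%N 0%N 0%N).
Qed.

Lemma h_pos n : pos (h n).
Proof.
elim: n => [|n IH] x y; first by rewrite /h /=; case: ifP.
by rewrite h_rec; apply: E_pos.
Qed.

Lemma claim n : forall x y a b c d, (a + c <= x)%N -> (b + d <= y)%N ->
  h n x y <= h n a b * h n c d.
Proof.
elim: n => [|n IH] x y a b c d hx hy.
  case: (eqVneq (minn x y) 0%N) => H.
    rewrite (h_min0 _ H) !h_min0 ?mulr1 //; lia.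
  rewrite {1}/h /= (negbTE H); apply: mulr_ge0; apply: (h_pos 0).
have hdec : dec (h n).
  move=> i j i' j' hi hj; have := IH i' j' i j 0%N 0%N.
  by rewrite (h_min0 _ (minn0 0)) mulr1 !addn0; apply.
have hsub : subm (h n) (h n) (h n) by move=> i1 j1 i2 j2; apply: IH.
rewrite !h_rec; apply: le_trans (E_subm _ _ _ _ hsub).
apply: E_anti => //; lia.
Qed.

Lemma h_le1 n x y : h n x y <= 1.
Proof.
have := @claim n x y 0 0 0 0 (leq0n _) (leq0n _).
by rewrite (h_min0 _ (minn0 0)) mulr1.
Qed.

Lemma h_pow n k : forall x y, (k <= minn x y)%N -> h n x y <= h n 1 1 ^+ k.
Proof.
elim: k => [|k IH] x y hk; first by rewrite expr0 h_le1.
have H : h n x y <= h n 1 1 * h n (x - 1) (y - 1) by apply: claim; lia.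
apply: le_trans H _.
rewrite exprS; apply: ler_wpM2l; first exact: h_pos.
apply: IH; lia.
Qed.

Lemma h_incr n x y : h n x y <= h n.+1 x y.
Proof.
elim: n x y => [|n IH] x y.
  case: (eqVneq (minn x y) 0%N) => H; first by rewrite !h_min0.
  rewrite {1}/h /= (negbTE H); exact: h_pos.
rewrite !h_rec; apply: E_mono => i j; exact: IH.
Qed.

End Main.

Unset Implicit Arguments.
Set Strict Implicit.

Theorem mainTheorem11 (R : realType) (p q : R) (N : nat) :
  0 < p < 1 -> 0 < q < 1 -> (1 <= N)%N ->
  forall x y : nat, (N <= minn x y)%N ->
    coop_hit_prob p q x y <= coop_hit_prob p q 1 1 ^+ N.
Proof.
move=> /andP[/ltW p0 /ltW p1] /andP[/ltW q0 /ltW q1] hN x y hxy.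
rewrite /coop_hit_prob.
have cvg_h : forall a b, cvgn (fun n => h p q n a b).
  move=> a b; apply: nondecreasing_is_cvgn.
    by apply/nondecreasing_seqP => n; exact: h_incr.
  by exists 1 => _ [n _ <-]; exact: h_le1.
have cvX : forall k, ((fun n => h p q n 1 1 ^+ k) @ \oo --> ((limn (fun n => h p q n 1 1)) ^+ k))%classic.
  elim=> [|k IH].
    under eq_fun do rewrite expr0.
    by rewrite expr0; exact: cvg_cst.
  under eq_fun do rewrite exprS.
  by rewrite exprS; apply: cvgM => //; exact: cvg_h.
rewrite -(cvg_lim _ (cvX N)).
apply: ler_lim; [exact: cvg_h | exact: cvgP (cvX N) |].
apply: nearW => n; exact: h_pow.
exact: norm_hausdorff.
Qed.
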